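(* The finite derivative test $\mathcal D$ is reasonable.
   Context: Let $\Omega=\{0,1\}$, $\Omega^\infty$ the set of infinite sequences $\omega=(\omega_1,\omega_2,\dots)$, and $\omega^t=(\omega_1,\dots,\omega_t)$ (also used for the cylinder set of all sequences with this prefix; $\omega^0=\emptyset$). $\mathcal G_t$ is the $\sigma$-algebra generated by the length-$t$ cylinders and $\mathcal G_\infty$ the $\sigma$-algebra generated by all cylinders. $\Delta(\Omega)$ is the set of probability distributions on $\Omega$; for $p\in\Delta(\Omega)$ and $x\in\Omega$, $p[x]$ is the probability of $x$. A forecasting strategy is a map $f:\bigcup_{t\ge0}(\Omega\times\Delta(\Omega)\times\Delta(\Omega))^t\to\Delta(\Omega)$; $F$ is the set of all forecasting strategies. Given an ordered pair $\vec f=(f,g)\in F\times F$ and $\omega\in\Omega^\infty$, the play path $(\omega,\vec f)$ is defined recursively: $(\omega,\vec f)^0=\emptyset$ and its $t$-th entry is $(\omega_t,f((\omega,\vec f)^{t-1}),g((\omega,\vec f)^{t-1}))$, where $(\omega,\vec f)^t$ is the prefix of length $t$. The pair $\vec f$ induces two probability measures on $(\Omega^\infty,\mathcal G_\infty)$, again denoted $f$ and $g$ (they depend on the pair), determined by $f(\omega^t)=\prod_{n=1}^t f((\omega,\vec f)^{n-1})[\omega_n]$ and $g(\omega^t)=\prod_{n=1}^t g((\omega,\vec f)^{n-1})[\omega_n]$. A (cardinal comparison) test is a sequence $T=(T_t)_{t>0}$ of $\mathcal G_t$-measurable functions $T_t:(\Omega\times\Delta(\Omega)\times\Delta(\Omega))^\infty\to[0,1]$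 (depending only on the first $t$ entries); write $T_t(\omega,\vec f)=T_t((\omega,\vec f))$ and $T(\omega,\vec f)=\lim_t T_t(\omega,\vec f)$ whenever the limit exists. For $\epsilon\in(0,1)$ let $L^{\vec f}_{T,\epsilon}=\{\omega:T(\omega,\vec f)\text{ exists and }>\epsilon\}$ and $R^{\vec f}_{T,\epsilon}=\{\omega:T(\omega,\vec f)\text{ exists and }<\epsilon\}$. $T$ is reasonable if for all $\vec f=(f,g)\in F\times F$ and every measurable $A\subseteq\Omega^\infty$: for $\epsilon\in(0,\frac12)$, if $g(A)>0$ and $f(A)<\frac{\epsilon}{1-\epsilon}g(A)$ then $g(A\cap R^{\vec f}_{T,\epsilon})>0$; and for $\epsilon\in(\frac12,1)$, if $f(A)>0$ and $g(A)<\frac{1-\epsilon}{\epsilon}f(A)$ then $f(A\cap L^{\vec f}_{T,\epsilon})>0$ (with $f,g$ the measures induced by $\vec f$). The finite derivative test $\mathcal D$ is defined for $t\ge0$ by $\mathcal D_{t+1}(\omega,\vec f)=\frac{f(\omega^t)}{f(\omega^t)+g(\omega^t)}$ if $f(\omega^t)>0$ or $g(\omega^t)>0$, and $\frac12$ otherwise. *)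

(* Defs.v *)
From Stdlib Require Import Reals List ClassicalEpsilon.
Import ListNotations.
Open Scope R_scope.

(* Omega = {0,1} is encoded as bool (true = 1, false = 0). *)
Definition Omega := bool.

(* An infinite sequence omega = (omega_1, omega_2, ...): omega_{n+1} = w n. *)
Definition seqOmega := nat -> Omega.

(* Delta(Omega): probability distributions on {0,1}, given by the
   probability of 1. *)
Record dist := mkDist { pone : R ; pone_range : 0 <= pone <= 1 }.

Definition pr (p : dist) (x : Omega) : R := if x then pone p else 1 - pone p.

(* An entry of a play path: (omega_t, f-forecast, g-forecast). *)
Definition entry := (Omega * dist * dist)%type.

Definition strategy := list entry -> dist.

Definition prefix (w : seqOmega) (t : nat) : list Omega := map w (seq 0 t).

Definition hist (f g : strategy) (s : list Omega) : list entry :=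
  fold_left (fun h b => h ++ [(b, f h, g h)]) s [].

Definition fweight (h : list entry) : R :=
  fold_right (fun e acc => pr (snd (fst e)) (fst (fst e)) * acc) 1 h.
Definition gweight (h : list entry) : R :=
  fold_right (fun e acc => pr (snd e) (fst (fst e)) * acc) 1 h.

Definition fcyl (f g : strategy) (s : list Omega) : R := fweight (hist f g s).
Definition gcyl (f g : strategy) (s : list Omega) : R := gweight (hist f g s).

Definition cylinder (s : list Omega) : seqOmega -> Prop :=
  fun w => prefix w (length s) = s.

Inductive measurable : (seqOmega -> Prop) -> Prop :=
  | meas_cyl : forall s, measurable (cylinder s)
  | meas_compl : forall A, measurable A -> measurable (fun w => ~ A w)
  | meas_union : forall As : nat -> seqOmega -> Prop,
      (forall k, measurable (As k)) -> measurable (fun w => exists k, As k w)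
  | meas_ext : forall A B, measurable A -> (forall w, A w <-> B w) -> measurable B.

(* The (unique) measure extending a premeasure w on cylinders, evaluated at a
   set A, given by the Caratheodory outer measure: the infimum of
   sum_k w(s_k) over countable covers of A by cylinders s_k.
   On G_infinity this coincides with the Caratheodory extension. *)
Definition cover_value (w : list Omega -> R) (A : seqOmega -> Prop) (x : R) : Prop :=
  exists s : nat -> list Omega,
    (forall v, A v -> exists k, cylinder (s k) v) /\
    infinite_sum (fun k => w (s k)) x.

Definition is_glb (E : R -> Prop) (m : R) : Prop :=
  (forall x, E x -> m <= x) /\ (forall y, (forall x, E x -> y <= x) -> y <= m).

Definition ext_measure (w : list Omega -> R) (A : seqOmega -> Prop) : R :=
  epsilon (inhabits 0) (fun m => is_glb (cover_value w A) m).

Definition fmeas (f g : strategy) (A : seqOmega -> Prop) : R := ext_measure (fcyl f g) A.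
Definition gmeas (f g : strategy) (A : seqOmega -> Prop) : R := ext_measure (gcyl f g) A.

(* A test: T t h is T_t evaluated on a play path whose first t entries are h
   (T_t depends only on the first t entries). *)
Definition test := nat -> list entry -> R.

Definition is_test (T : test) : Prop := forall t h, 0 <= T t h <= 1.

Definition Tt (T : test) (f g : strategy) (w : seqOmega) (t : nat) : R :=
  T t (hist f g (prefix w t)).

Definition Tlim (T : test) (f g : strategy) (w : seqOmega) (l : R) : Prop :=
  Un_cv (Tt T f g w) l.

Definition Lset (T : test) (f g : strategy) (eps : R) : seqOmega -> Prop :=
  fun w => exists l, Tlim T f g w l /\ l > eps.
Definition Rset (T : test) (f g : strategy) (eps : R) : seqOmega -> Prop :=
  fun w => exists l, Tlim T f g w l /\ l < eps.

Definition reasonable (T : test) : Prop :=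
  forall (f g : strategy) (A : seqOmega -> Prop), measurable A ->
    (forall eps, 0 < eps < 1/2 ->
       gmeas f g A > 0 -> fmeas f g A < eps / (1 - eps) * gmeas f g A ->
       gmeas f g (fun w => A w /\ Rset T f g eps w) > 0) /\
    (forall eps, 1/2 < eps < 1 ->
       fmeas f g A > 0 -> gmeas f g A < (1 - eps) / eps * fmeas f g A ->
       fmeas f g (fun w => A w /\ Lset T f g eps w) > 0).

(* The finite derivative test: D_{t+1} depends on the first t entries. *)
Definition Dtest : test := fun t h =>
  match t with
  | O => 1/2   (* index 0 is not part of the test; irrelevant for limits *)
  | S k =>
      let h' := firstn k h in
      let a := fweight h' in
      let b := gweight h' in
      if Rlt_dec 0 a then a / (a + b)
      else if Rlt_dec 0 b then a / (a + b)
      else 1/2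
  end.

(* Main.v *)
Require Import Defs.
From Stdlib Require Import Reals List Lia Lra ClassicalEpsilon Classical.
Import ListNotations.
Open Scope R_scope.

Section Sums.
Context {X : Type}.

End Sums.
Fixpoint sumw {X : Type} (w : X -> R) (L : list X) : R :=
  match L with [] => 0 | x :: L' => w x + sumw w L' end.
Section Sums2.
Context {X : Type}.

Lemma sumw_filter (w : X -> R) (p : X -> bool) L :
  sumw w L = sumw w (filter p L) + sumw w (filter (fun x => negb (p x)) L).
Proof. induction L as [|x L IH]; simpl; [lra|]. destruct (p x); simpl; lra. Qed.

Lemma sumw_le (w1 w2 : X -> R) L :
  (forall x, In x L -> w1 x <= w2 x) -> sumw w1 L <= sumw w2 L.
Proof. induction L as [|x L IH]; simpl; intros H; [lra|].
  pose proof (H x (or_introl eq_refl)). pose proof (IH (fun y Hy => H y (or_intror Hy))). lra. Qed.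

Lemma sumw_scale (w : X -> R) c L : sumw (fun x => c * w x) L = c * sumw w L.
Proof. induction L; simpl; [ring|]. rewrite IHL. ring. Qed.

Lemma sumw_nonneg (w : X -> R) L : (forall x, 0 <= w x) -> 0 <= sumw w L.
Proof. intros H; induction L; simpl; [lra|]. pose proof (H a). lra. Qed.

Lemma sumw_const (c : R) (L : list X) : sumw (fun _ => c) L = INR (length L) * c.
Proof. induction L; simpl length; [simpl; ring|]. rewrite S_INR. simpl sumw. rewrite IHL. ring. Qed.

Lemma sumw_single (w : X -> R) x L : NoDup L -> (forall y, In y L -> y = x) -> 0 <= w x -> sumw w L <= w x.
Proof.
  intros ND H Hx. destruct L as [|y L]; simpl; [lra|].
  destruct L as [|z L]; simpl.
  - rewrite (H y (or_introl eq_refl)). lra.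
  - exfalso. inversion ND as [|a b Hn ND']; subst. apply Hn. left.
    rewrite (H y (or_introl eq_refl)), (H z (or_intror (or_introl eq_refl))). reflexivity.
Qed.

Definition decide (P : Prop) : bool := if excluded_middle_informative P then true else false.
Lemma decide_spec P : decide P = true <-> P.
Proof. unfold decide; destruct excluded_middle_informative; split; intros; auto; discriminate. Qed.

Lemma union2_bound (w : X -> R) (C1 C2 : X -> Prop) M1 M2 L :
  NoDup L -> Forall (fun x => C1 x \/ C2 x) L ->
  (forall L', NoDup L' -> Forall C1 L' -> sumw w L' <= M1) ->
  (forall L', NoDup L' -> Forall C2 L' -> sumw w L' <= M2) ->
  sumw w L <= M1 + M2.
Proof.
  intros ND HF B1 B2. rewrite (sumw_filter w (fun x => decide (C1 x)) L).
  assert (H1 := B1 (filter (fun x => decide (C1 x)) L) (NoDup_filter _ ND)).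
  assert (H2 := B2 (filter (fun x => negb (decide (C1 x))) L) (NoDup_filter _ ND)).
  rewrite Forall_forall in HF.
  assert (sumw w (filter (fun x => decide (C1 x)) L) <= M1).
  { apply H1. apply Forall_forall. intros x Hx. apply filter_In in Hx as [_ Hx].
    apply decide_spec; auto. }
  assert (sumw w (filter (fun x => negb (decide (C1 x))) L) <= M2).
  { apply H2. apply Forall_forall. intros x Hx. apply filter_In in Hx as [Hx Hd].
    destruct (HF x Hx); auto. exfalso. apply decide_spec in H0. rewrite H0 in Hd. discriminate. }
  lra.
Qed.

Lemma unionJ_bound {I : Type} (w : X -> R) (C : I -> X -> Prop) (M : I -> R) (J : list I) L :
  NoDup L -> Forall (fun x => exists i, In i J /\ C i x) L ->
  (forall i, In i J -> forall L', NoDup L' -> Forall (C i) L' -> sumw w L' <= M i) ->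
  sumw w L <= sumw M J.
Proof.
  revert L. induction J as [|i J IH]; intros L ND HF HB; simpl.
  - destruct L as [|x L]; simpl; [lra|]. inversion HF; subst. destruct H1 as [i [[] _]].
  - apply (union2_bound w (C i) (fun x => exists j, In j J /\ C j x)); auto.
    + eapply Forall_impl; [|exact HF]. intros x [j [[<-|Hj] Hc]]; [left; auto| right; eauto].
    + intros L' ND' HF'. apply HB; auto. left; auto.
    + intros L' ND' HF'. apply IH; auto. intros j Hj. apply HB. right; auto.
Qed.

Lemma choose_indices {I : Type} (Q : I -> Prop) (C : I -> X -> Prop) L :
  Forall (fun x => exists i, Q i /\ C i x) L ->
  exists J, Forall Q J /\ Forall (fun x => exists i, In i J /\ C i x) L.
Proof.
  induction L as [|x L IH]; intros HF.
  - exists []. split; constructor.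
  - inversion HF; subst. destruct H1 as [i [Qi Ci]]. destruct (IH H2) as [J [HJ HL]].
    exists (i :: J). split; [constructor; auto|]. constructor.
    + exists i; split; [left|]; auto.
    + eapply Forall_impl; [|exact HL]. intros y [j [Hj Cj]]. exists j; split; [right|]; auto.
Qed.

Lemma union_bound {I : Type} (decI : forall x y : I, {x = y} + {x <> y})
  (w : X -> R) (Q : I -> Prop) (C : I -> X -> Prop) (M : I -> R) L :
  NoDup L -> Forall (fun x => exists i, Q i /\ C i x) L ->
  (forall i, Q i -> forall L', NoDup L' -> Forall (C i) L' -> sumw w L' <= M i) ->
  exists J, NoDup J /\ Forall Q J /\ sumw w L <= sumw M J.
Proof.
  intros ND HF HB. destruct (choose_indices Q C L HF) as [J [HJ HL]].
  exists (nodup decI J). split; [apply NoDup_nodup|]. rewrite Forall_forall in HJ. split.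
  - apply Forall_forall. intros i Hi. apply nodup_In in Hi. auto.
  - apply (unionJ_bound w C M); auto.
    + eapply Forall_impl; [|exact HL]. intros x [i [Hi Ci]]. exists i. split; auto. apply nodup_In; auto.
    + intros i Hi. apply HB. apply HJ. apply nodup_In in Hi; auto.
Qed.
End Sums2.

Lemma sumw_nat_le (a : nat -> R) (J : list nat) N :
  (forall n, 0 <= a n) -> NoDup J -> (forall k, In k J -> (k <= N)%nat) -> sumw a J <= sum_f_R0 a N.
Proof.
  intros Ha. revert J. induction N as [|N IH]; intros J ND HJ; simpl.
  - apply sumw_single; auto. intros y Hy. specialize (HJ y Hy). lia.
  - rewrite (sumw_filter a (fun k => Nat.eqb k (S N)) J).
    assert (sumw a (filter (fun k => Nat.eqb k (S N)) J) <= a (S N)).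
    { apply sumw_single; auto. apply NoDup_filter; auto. intros y Hy. apply filter_In in Hy as [_ Hy].
      apply Nat.eqb_eq; auto. }
    assert (sumw a (filter (fun k => negb (Nat.eqb k (S N))) J) <= sum_f_R0 a N).
    { apply IH. apply NoDup_filter; auto. intros k Hk. apply filter_In in Hk as [Hk Hn].
      specialize (HJ k Hk). destruct (Nat.eqb_spec k (S N)); simpl in Hn; [discriminate|]. lia. }
    lra.
Qed.

Definition weight (w : list bool -> R) : Prop :=
  (forall s, 0 <= w s) /\ w [] = 1 /\ (forall s, w s = w (s ++ [true]) + w (s ++ [false])).

Definition ext (s u : list bool) := exists r, u = s ++ r.

Lemma antichain_sum w (Hw : weight w) : forall n s L,
  NoDup L -> Forall (ext s) L ->
  (forall u v r, In u L -> In v L -> v = u ++ r -> r = []) ->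
  (forall u, In u L -> (length u <= length s + n)%nat) ->
  sumw w L <= w s.
Proof.
  destruct Hw as [Hpos [_ Hadd]].
  induction n as [|n IH]; intros s L ND HE HA HL.
  - apply sumw_single; auto. intros y Hy. rewrite Forall_forall in HE.
    destruct (HE y Hy) as [r ->]. specialize (HL _ Hy). rewrite length_app in HL.
    destruct r; [rewrite app_nil_r; auto|simpl in HL; lia].
  - rewrite Forall_forall in HE.
    destruct (in_dec (list_eq_dec Bool.bool_dec) s L) as [Hs|Hs].
    + apply sumw_single; auto. intros y Hy. destruct (HE y Hy) as [r ->].
      rewrite (HA s (s ++ r) r Hs Hy eq_refl). apply app_nil_r.
    + set (p := fun u : list bool => nth (length s) u false).
      rewrite (sumw_filter w p L). rewrite (Hadd s).
      assert (Hsplit : forall u, In u L -> exists b r, u = (s ++ [b]) ++ r /\ p u = b).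
      { intros u Hu. destruct (HE u Hu) as [r Hr]. destruct r as [|b r].
        - rewrite app_nil_r in Hr. subst. contradiction.
        - exists b, r. subst. rewrite <- app_assoc. split; auto. unfold p.
          rewrite app_nth2 by lia. rewrite Nat.sub_diag. reflexivity. }
      assert (Hgen : forall (b : bool) (q : list bool -> bool), (forall u, In u L -> q u = true -> p u = b) ->
               sumw w (filter q L) <= w (s ++ [b])).
      { intros b q Hq. apply (IH (s ++ [b])).
        - apply NoDup_filter; auto.
        - apply Forall_forall. intros u Hu. apply filter_In in Hu as [Hu Hqu].
          destruct (Hsplit u Hu) as [b' [r [Hr Hp]]]. rewrite (Hq u Hu Hqu) in Hp. subst. exists r; auto.
        - intros u v r Hu Hv. apply filter_In in Hu as [Hu _]. apply filter_In in Hv as [Hv _]. eauto.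
        - intros u Hu. apply filter_In in Hu as [Hu Hqu]. destruct (Hsplit u Hu) as [b' [r [Hr Hp]]].
          specialize (HL u Hu). subst u. rewrite !length_app in *. simpl in *. lia. }
      assert (sumw w (filter p L) <= w (s ++ [true])) by (apply Hgen; auto).
      assert (sumw w (filter (fun x => negb (p x)) L) <= w (s ++ [false])).
      { apply Hgen. intros u _ Hq. destruct (p u); auto. }
      lra.
Qed.


Lemma len_bound (L : list (list bool)) : exists n, forall u, In u L -> (length u <= n)%nat.
Proof.
  induction L as [|x L [n Hn]]. exists 0%nat; intros u [].
  exists (Nat.max n (length x)). intros u [<-|Hu]; [lia|]. specialize (Hn u Hu). lia.
Qed.

Definition Stop (s : list bool) (P : list bool -> Prop) (u : list bool) : Prop :=
  ext s u /\ P u /\ (forall r1 r2, u = s ++ r1 ++ r2 -> r2 <> [] -> ~ P (s ++ r1)).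

Lemma stop_sum w (Hw : weight w) s P L :
  NoDup L -> Forall (Stop s P) L -> sumw w L <= w s.
Proof.
  intros ND HF. rewrite Forall_forall in HF. destruct (len_bound L) as [n Hn].
  apply (antichain_sum w Hw n s L ND).
  - apply Forall_forall. intros u Hu. apply HF; auto.
  - intros u v r Hu Hv Huv. destruct (HF u Hu) as [[r1 Hr1] [Pu _]].
    destruct (HF v Hv) as [_ [_ Hv3]]. destruct r as [|b r]; auto. exfalso.
    apply (Hv3 r1 (b :: r)); [subst; rewrite app_assoc; auto| discriminate|]. subst; auto.
  - intros u Hu. specialize (Hn u Hu). lia.
Qed.

Lemma prefix_length w n : length (prefix w n) = n.
Proof. unfold prefix. rewrite length_map, length_seq. reflexivity. Qed.

Lemma prefix_add w n d : prefix w (n + d) = prefix w n ++ map w (seq n d).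
Proof. unfold prefix. rewrite seq_app, map_app. reflexivity. Qed.

Lemma prefix_S w n : prefix w (S n) = prefix w n ++ [w n].
Proof. unfold prefix. rewrite seq_S, map_app. reflexivity. Qed.

Lemma prefix_prefix w m x y : prefix w m = x ++ y -> x = prefix w (length x).
Proof.
  intros H. assert (Hl : (length x <= m)%nat).
  { pose proof (f_equal (@length _) H) as H'. rewrite prefix_length, length_app in H'. lia. }
  replace m with (length x + (m - length x))%nat in H by lia.
  rewrite prefix_add in H.
  assert (Hf : forall (l1 l2 : list bool), firstn (length l1) (l1 ++ l2) = l1).
  { intros l1 l2. pose proof (firstn_app_2 0 l1 l2) as E. rewrite Nat.add_0_r in E. rewrite E. simpl. apply app_nil_r. }
  pose proof (f_equal (firstn (length x)) H) as H'. rewrite Hf in H'.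
  rewrite <- (prefix_length w (length x)) in H' at 1. rewrite Hf in H'. auto.
Qed.

Lemma cyl_prefix w n : cylinder (prefix w n) w.
Proof. unfold cylinder. rewrite prefix_length. reflexivity. Qed.

Lemma stop_exists (w : seqOmega) (P : list bool -> Prop) n : forall m, (n <= m)%nat -> P (prefix w m) ->
  exists m', (n <= m' <= m)%nat /\ Stop (prefix w n) P (prefix w m').
Proof.
  induction m as [m IH] using (well_founded_induction Nat.lt_wf_0). intros Hnm HP.
  destruct (classic (exists m'', (n <= m'' < m)%nat /\ P (prefix w m''))) as [[m'' [H1 H2]]|Hno].
  - destruct (IH m'' (proj2 H1) (proj1 H1) H2) as [m' [Hm' Hs]]. exists m'. split; auto. lia.
  - exists m. split; [lia|]. split; [|split; auto].
    + exists (map w (seq n (m - n))). rewrite <- prefix_add. f_equal. lia.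
    + unfold Omega in *. intros r1 r2 Heq Hr2 HP'. apply Hno. exists (length (prefix w n ++ r1)).
      rewrite app_assoc in Heq. pose proof (prefix_prefix _ _ _ _ Heq) as Hp.
      split; [|unfold Omega in *; rewrite <- Hp; exact HP'].
      pose proof (f_equal (@length _) Heq) as Hl. rewrite prefix_length, !length_app in Hl.
      rewrite length_app, prefix_length. destruct r2; [congruence|]. simpl in Hl. rewrite prefix_length in Hl. change (@length Omega r1) with (@length bool r1). lia.
Qed.

Definition Cov (w : list bool -> R) (A : seqOmega -> Prop) (M : R) : Prop :=
  exists C : list bool -> Prop,
    (forall v, A v -> exists s, C s /\ cylinder s v) /\
    (forall L, NoDup L -> Forall C L -> sumw w L <= M).

Lemma Cov_mono w A B M M' : Cov w B M -> (forall v, A v -> B v) -> M <= M' -> Cov w A M'.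
Proof.
  intros [C [H1 H2]] HAB HM. exists C. split; auto. intros L ND HF. specialize (H2 L ND HF). lra.
Qed.

Lemma cv_const c : Un_cv (fun _ => c) c.
Proof. intros e He. exists 0%nat. intros. rewrite Rdist_eq. lra. Qed.

Fixpoint code (u : list bool) : nat :=
  match u with [] => 0%nat | b :: u' => S (2 * code u' + (if b then 1 else 0)) end.

Lemma code_inj : forall u v, code u = code v -> u = v.
Proof.
  induction u as [|b u IH]; intros [|b' v] H; simpl in H; try lia; auto.
  assert (b = b' /\ code u = code v) as [-> E] by (destruct b, b'; split; auto; lia).
  rewrite (IH v E). reflexivity.
Qed.

Fixpoint pth (w : list bool -> R) (k : nat) : list bool :=
  match k with
  | O => []
  | S k => let q := pth w k in
           if Rle_dec (w (q ++ [true])) (w (q ++ [false])) then q ++ [true] else q ++ [false]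
  end.

Lemma pth_bound w (Hw : weight w) k : w (pth w k) <= (1/2)^k.
Proof.
  destruct Hw as [Hpos [H0 Hadd]]. induction k; simpl.
  - rewrite H0. lra.
  - specialize (Hadd (pth w k)). destruct Rle_dec; lra.
Qed.

Definition pick (C : list bool -> Prop) (k : nat) : option (list bool) :=
  match excluded_middle_informative (exists u, code u = k /\ C u) with
  | left H => Some (proj1_sig (constructive_indefinite_description _ H))
  | right _ => None
  end.

Lemma pick_some C k u : pick C k = Some u -> code u = k /\ C u.
Proof.
  unfold pick. destruct excluded_middle_informative as [H|H]; [|discriminate].
  destruct (constructive_indefinite_description _ H) as [x Hx]. simpl. intros E. inversion E; subst; auto.
Qed.

Lemma pick_none C k : pick C k = None -> ~ exists u, code u = k /\ C u.
Proof. unfold pick. destruct excluded_middle_informative as [H|H]; [discriminate|auto]. Qed.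

Lemma geom_sum m n : sum_f_R0 (fun k => (1/2)^(k+m)) n + 2 * (1/2)^(S n + m) = 2 * (1/2)^m.
Proof.
  induction n; simpl.
  - lra.
  - rewrite <- IHn. simpl. lra.
Qed.

Lemma sum_nonneg_growing (a : nat -> R) : (forall n, 0 <= a n) -> Un_growing (sum_f_R0 a).
Proof. intros H n. simpl. specialize (H (S n)). lra. Qed.

Lemma cover_exists w (Hw : weight w) A M : Cov w A M -> forall m,
  exists x, cover_value w A x /\ x <= M + 2 * (1/2)^m.
Proof.
  intros [C [Hcov HB]] m.
  set (t := fun k => match pick C k with Some u => u | None => pth w (k + m) end).
  destruct Hw as [Hpos [H0 Hadd]].
  assert (Hind : forall n, exists L, NoDup L /\ Forall C L /\ (forall u, In u L -> (code u <= n)%nat) /\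
            sum_f_R0 (fun k => w (t k)) n <= sumw w L + sum_f_R0 (fun k => (1/2)^(k+m)) n).
  { induction n as [|n [L [ND [HF [Hc Hs]]]]].
    - simpl. unfold t. destruct (pick C 0) as [u|] eqn:E.
      + apply pick_some in E as [E1 E2]. exists [u]. split; [constructor; auto; constructor|].
        split; [constructor; auto|]. split; [intros v [<-|[]]; lia|]. simpl. pose proof (pow_le (1/2) (0+m) ltac:(lra)). simpl in *. lra.
      + exists []. split; [constructor|]. split; [constructor|]. split; [intros v []|]. simpl.
        pose proof (pth_bound w (conj Hpos (conj H0 Hadd)) (0 + m)). simpl in *. lra.
    - simpl. unfold t at 2. destruct (pick C (S n)) as [u|] eqn:E.
      + apply pick_some in E as [E1 E2]. exists (u :: L). split.
        { constructor; auto. intros Hu. specialize (Hc u Hu). lia. }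
        split; [constructor; auto|]. split; [intros v [<-|Hv]; [lia|specialize (Hc v Hv); lia]|].
        simpl. assert (0 <= (1/2)^(n+m)) by (apply pow_le; lra). lra.
      + exists L. split; auto. split; auto. split; [intros v Hv; specialize (Hc v Hv); lia|].
        pose proof (pth_bound w (conj Hpos (conj H0 Hadd)) (S n + m)). simpl in *. lra. }
  assert (Hbd : forall n, sum_f_R0 (fun k => w (t k)) n <= M + 2 * (1/2)^m).
  { intros n. destruct (Hind n) as [L [ND [HF [_ Hs]]]]. specialize (HB L ND HF).
    pose proof (geom_sum m n). pose proof (pow_le (1/2) (S n + m) ltac:(lra)). lra. }
  assert (Hg : Un_growing (sum_f_R0 (fun k => w (t k)))) by (apply sum_nonneg_growing; auto).
  destruct (growing_cv _ Hg) as [x Hx].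
  { exists (M + 2 * (1/2)^m). intros y [n ->]. apply Hbd. }
  exists x. split.
  - exists t. split; [|exact Hx]. intros v Hv. destruct (Hcov v Hv) as [s [Cs Hs]].
    exists (code s). unfold t. destruct (pick C (code s)) as [u|] eqn:E.
    + apply pick_some in E as [E1 E2]. apply code_inj in E1. subst; auto.
    + exfalso. apply (pick_none C (code s) E). eauto.
  - exact (@Rle_cv_lim _ (fun _ => M + 2 * (1/2)^m) _ _ Hbd Hx (cv_const _)).
Qed.

Lemma cover_value_nonneg w (Hw : weight w) A x : cover_value w A x -> 0 <= x.
Proof.
  intros [s [_ Hs]]. destruct Hw as [Hpos _].
  apply (@Rle_cv_lim (fun _ => 0) (sum_f_R0 (fun k => w (s k)))); [|apply cv_const|exact Hs].
  intros n. apply cond_pos_sum. intros; auto.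
Qed.

Lemma Cov_top w (Hw : weight w) A : Cov w A 1.
Proof.
  exists (fun u => u = []). split.
  - intros v _. exists []. split; auto. reflexivity.
  - intros L ND HF. destruct Hw as [Hpos [H0 _]]. rewrite <- H0. apply sumw_single; auto.
    rewrite Forall_forall in HF. auto.
Qed.

Lemma ext_glb w (Hw : weight w) A : is_glb (cover_value w A) (ext_measure w A).
Proof.
  unfold ext_measure. apply epsilon_spec.
  destruct (cover_exists w Hw A 1 (Cov_top w Hw A) 0) as [x0 [Hx0 _]].
  destruct (completeness (fun y => cover_value w A (- y))) as [l [Hl1 Hl2]].
  { exists 0. intros y Hy. pose proof (cover_value_nonneg w Hw A _ Hy). lra. }
  { exists (- x0). rewrite Ropp_involutive. auto. }
  exists (- l). split.
  - intros x Hx. assert (- x <= l) by (apply Hl1; rewrite Ropp_involutive; auto). lra.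
  - intros y Hy. assert (l <= - y).
    { apply Hl2. intros z Hz. specialize (Hy _ Hz). lra. }
    lra.
Qed.

Lemma ext_nonneg w (Hw : weight w) A : 0 <= ext_measure w A.
Proof.
  destruct (ext_glb w Hw A) as [_ H]. apply H. intros x Hx. apply (cover_value_nonneg w Hw A x Hx).
Qed.

Lemma ext_mono w (Hw : weight w) A B : (forall v, A v -> B v) -> ext_measure w A <= ext_measure w B.
Proof.
  intros HAB. destruct (ext_glb w Hw A) as [HA1 _]. destruct (ext_glb w Hw B) as [_ HB2].
  apply HB2. intros x [s [Hc Hs]]. apply HA1. exists s. split; auto.
Qed.

Lemma Cov_ext w (Hw : weight w) A M : Cov w A M -> ext_measure w A <= M.
Proof.
  intros HC. destruct (ext_glb w Hw A) as [H1 _].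
  assert (Hall : forall m, ext_measure w A <= M + 2 * (1/2)^m).
  { intros m. destruct (cover_exists w Hw A M HC m) as [x [Hx Hxm]]. specialize (H1 x Hx). lra. }
  destruct (Rle_or_lt (ext_measure w A) M) as [|Hlt]; auto. exfalso.
  assert (Habs : Rabs (1/2) < 1) by (rewrite Rabs_right; lra).
  destruct (pow_lt_1_zero (1/2) Habs ((ext_measure w A - M) / 2)) as [N HN]; [lra|].
  specialize (HN N (le_n N)). specialize (Hall N). rewrite Rabs_right in HN.
  - lra.
  - apply Rle_ge. apply pow_le. lra.
Qed.

Lemma ext_Cov w (Hw : weight w) A M : ext_measure w A < M -> Cov w A M.
Proof.
  intros Hlt. destruct (ext_glb w Hw A) as [_ H2].
  destruct (classic (exists x, cover_value w A x /\ x < M)) as [[x [[s [Hc Hs]] Hx]]|Hno].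
  - exists (fun u => exists k, s k = u). split.
    + intros v Hv. destruct (Hc v Hv) as [k Hk]. eauto.
    + intros L ND HF. destruct Hw as [Hpos [H0 Hadd]].
      destruct (union_bound Nat.eq_dec w (fun _ => True) (fun k u => s k = u) (fun k => w (s k)) L ND)
        as [J [NDJ [_ HJ]]].
      * eapply Forall_impl; [|exact HF]. intros u [k Hk]. eauto.
      * intros k _ L' ND' HF'. apply sumw_single; auto. rewrite Forall_forall in HF'. intros y Hy. symmetry. auto.
      * assert (exists N, forall k, In k J -> (k <= N)%nat) as [N HN].
        { clear. induction J as [|k J [N HN]]; [exists 0%nat; intros k []|].
          exists (Nat.max k N). intros k' [<-|Hk']; [lia|specialize (HN k' Hk'); lia]. }
        pose proof (sumw_nat_le (fun k => w (s k)) J N (fun n => Hpos _) NDJ HN).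
        pose proof (growing_ineq _ _ (sum_nonneg_growing (fun k => w (s k)) (fun n => Hpos _)) Hs N).
        lra.
  - exfalso. assert (M <= ext_measure w A).
    { apply H2. intros x Hx. destruct (Rle_or_lt M x); auto. exfalso. apply Hno; eauto. }
    lra.
Qed.

Lemma Cov_union {I : Type} (decI : forall x y : I, {x = y} + {x <> y}) w (Q : I -> Prop)
  (B : I -> seqOmega -> Prop) (M : I -> R) K :
  (forall i, Q i -> Cov w (B i) (M i)) ->
  (forall J, NoDup J -> Forall Q J -> sumw M J <= K) ->
  Cov w (fun v => exists i, Q i /\ B i v) K.
Proof.
  intros HC HK.
  set (Cf := fun i => match excluded_middle_informative (Q i) with
                      | left H => proj1_sig (constructive_indefinite_description _ (HC i H))
                      | right _ => fun _ => False end).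
  assert (Hspec : forall i, Q i -> (forall v, B i v -> exists s, Cf i s /\ cylinder s v) /\
                     (forall L, NoDup L -> Forall (Cf i) L -> sumw w L <= M i)).
  { intros i Qi. unfold Cf. destruct excluded_middle_informative as [H|H]; [|contradiction].
    destruct (constructive_indefinite_description _ (HC i H)) as [C HCi]. exact HCi. }
  exists (fun u => exists i, Q i /\ Cf i u). split.
  - intros v [i [Qi Bi]]. destruct ((proj1 (Hspec i Qi)) v Bi) as [s [Cs Hs]]. eauto.
  - intros L ND HF. destruct (union_bound decI w Q Cf M L ND HF) as [J [NDJ [QJ HJ]]].
    + intros i Qi. apply (proj2 (Hspec i Qi)).
    + specialize (HK J NDJ QJ). lra.
Qed.

Lemma Rdiv_le_0_compat x y : 0 <= x -> 0 < y -> 0 <= x / y.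
Proof. intros. unfold Rdiv. apply Rmult_le_pos; auto. left; apply Rinv_0_lt_compat; auto. Qed.

Definition Dval (F G : list bool -> R) (s : list bool) : R :=
  let a := F s in let b := G s in
  if Rlt_dec 0 a then a / (a + b) else if Rlt_dec 0 b then a / (a + b) else 1/2.

Section D.
Variables F G : list bool -> R.
Hypothesis HF : weight F.
Hypothesis HG : weight G.

Lemma Fpos s : 0 <= F s. Proof. apply HF. Qed.
Lemma Gpos s : 0 <= G s. Proof. apply HG. Qed.

Lemma Dval_range s : 0 <= Dval F G s <= 1.
Proof.
  unfold Dval. pose proof (Fpos s). pose proof (Gpos s).
  destruct Rlt_dec as [K1|K1].
  - split. apply Rdiv_le_0_compat; lra. apply Rmult_le_reg_r with (F s + G s); [lra|].
    unfold Rdiv. rewrite Rmult_assoc, Rinv_l by lra. lra.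
  - destruct Rlt_dec as [K2|K2].
    + replace (F s) with 0 by lra. unfold Rdiv. rewrite Rmult_0_l. lra.
    + lra.
Qed.

Lemma Dval_lo s a : 0 <= a < 1 -> Dval F G s < a -> F s <= a / (1 - a) * G s.
Proof.
  intros Ha HD. unfold Dval in HD. pose proof (Fpos s). pose proof (Gpos s).
  assert (0 <= a / (1 - a)) by (apply Rdiv_le_0_compat; lra).
  destruct (Rlt_dec 0 (F s)) as [K1|K1].
  - assert (E : F s = F s / (F s + G s) * (F s + G s)) by (field; lra).
    assert (F s < a * (F s + G s)) by (rewrite E at 1; apply Rmult_lt_compat_r; lra).
    assert (E2 : a / (1 - a) * G s = a * G s / (1 - a)) by (field; lra). rewrite E2.
    apply Rmult_le_reg_r with (1 - a); [lra|]. unfold Rdiv. rewrite Rmult_assoc, Rinv_l by lra. lra.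
  - replace (F s) with 0 by lra. nra.
Qed.

Lemma Dval_hi s b : 0 < b <= 1 -> Dval F G s > b -> G s <= (1 - b) / b * F s.
Proof.
  intros Hb HD. unfold Dval in HD. pose proof (Fpos s). pose proof (Gpos s).
  assert (0 <= (1 - b) / b) by (apply Rdiv_le_0_compat; lra).
  destruct (Rlt_dec 0 (F s)) as [K1|K1].
  - assert (E : F s = F s / (F s + G s) * (F s + G s)) by (field; lra).
    assert (F s > b * (F s + G s)) by (rewrite E at 1; apply Rmult_gt_compat_r; lra).
    assert (E2 : (1 - b) / b * F s = (1 - b) * F s / b) by (field; lra). rewrite E2.
    apply Rmult_le_reg_r with b; [lra|]. unfold Rdiv. rewrite Rmult_assoc, Rinv_l by lra. lra.
  - destruct (Rlt_dec 0 (G s)) as [K2|K2].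
    + replace (F s) with 0 in HD by lra. unfold Rdiv in HD. rewrite Rmult_0_l in HD. lra.
    + replace (G s) with 0 by lra. nra.
Qed.

Definition Dn (w : seqOmega) (n : nat) : R := Dval F G (prefix w n).

Definition io (P : nat -> Prop) := forall N, exists n, (n >= N)%nat /\ P n.
Definition ev (P : nat -> Prop) := exists N, forall n, (n >= N)%nat -> P n.

Definition U (a b : R) (w : seqOmega) : Prop := io (fun n => Dn w n < a) /\ io (fun n => Dn w n > b).

Fixpoint Hs (a b : R) (k : nat) : list bool -> Prop :=
  match k with
  | O => fun u => u = []
  | S k => fun v => exists u, (exists s, Hs a b k s /\ Stop s (fun x => Dval F G x < a) u) /\
                         Stop u (fun x => Dval F G x > b) v
  end.

Lemma U_cover a b k w : U a b w -> exists n, Hs a b k (prefix w n).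
Proof.
  intros [Ha Hb]. induction k as [|k [n Hn]].
  - exists 0%nat. reflexivity.
  - destruct (Ha n) as [m1 [Hm1 P1]].
    destruct (stop_exists w (fun x => Dval F G x < a) n m1 Hm1 P1) as [m1' [Hr1 S1]].
    destruct (Hb m1') as [m2 [Hm2 P2]].
    destruct (stop_exists w (fun x => Dval F G x > b) m1' m2 Hm2 P2) as [m2' [Hr2 S2]].
    exists m2'. simpl. exists (prefix w m1'). split; auto. exists (prefix w n). split; auto.
Qed.

Lemma H_bound a b (Hab : 0 <= a < b) (Hb1 : b <= 1) : forall k L, NoDup L -> Forall (Hs a b k) L ->
  sumw G L <= ((1 - b) / b * (a / (1 - a))) ^ k.
Proof.
  assert (Hk1 : 0 <= (1 - b) / b) by (apply Rdiv_le_0_compat; lra).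
  assert (Hk2 : 0 <= a / (1 - a)) by (apply Rdiv_le_0_compat; lra).
  induction k as [|k IH]; intros L ND HFL.
  - simpl. destruct HG as [Hp [H0 _]]. rewrite <- H0. apply sumw_single; auto.
    rewrite Forall_forall in HFL. auto.
  - simpl in HFL.
    destruct (union_bound (list_eq_dec Bool.bool_dec) G
                (fun u => exists s, Hs a b k s /\ Stop s (fun x => Dval F G x < a) u)
                (fun u => Stop u (fun x => Dval F G x > b))
                (fun u => (1 - b) / b * F u) L ND HFL) as [J [NDJ [QJ HJ]]].
    { intros u _ L' ND' HF'. apply Rle_trans with (sumw (fun x => (1 - b) / b * F x) L').
      - apply sumw_le. intros x Hx. rewrite Forall_forall in HF'. destruct (HF' x Hx) as [_ [Px _]].
        apply Dval_hi; auto. lra.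
      - rewrite sumw_scale. apply Rmult_le_compat_l; auto. apply (stop_sum F HF u _ L' ND' HF'). }
    destruct (union_bound (list_eq_dec Bool.bool_dec) G (Hs a b k)
                (fun s u => Stop s (fun x => Dval F G x < a) u) (fun s => G s) J NDJ QJ)
      as [J2 [NDJ2 [QJ2 HJ2]]].
    { intros s _ L' ND' HF'. apply (stop_sum G HG s _ L' ND' HF'). }
    specialize (IH J2 NDJ2 QJ2).
    assert (sumw (fun u => (1 - b) / b * F u) J <= (1 - b) / b * (a / (1 - a)) * sumw G J).
    { rewrite sumw_scale. rewrite Rmult_assoc. apply Rmult_le_compat_l; auto.
      rewrite <- sumw_scale. apply sumw_le. intros x Hx. rewrite Forall_forall in QJ.
      destruct (QJ x Hx) as [s [_ [_ [Px _]]]]. apply Dval_lo; auto. lra. }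
    simpl. change (sumw (fun s => G s) J2) with (sumw G J2) in HJ2.
    assert (0 <= (1 - b) / b * (a / (1 - a))) by (apply Rmult_le_pos; auto).
    assert ((1 - b) / b * (a / (1 - a)) * sumw G J <= (1 - b) / b * (a / (1 - a)) * ((1 - b) / b * (a / (1 - a))) ^ k).
    { apply Rmult_le_compat_l; auto. lra. }
    lra.
Qed.

Lemma U_null a b (Hab : 0 <= a < b) (Hb1 : b <= 1) d : d > 0 -> Cov G (U a b) d.
Proof.
  intros Hd. set (r := (1 - b) / b * (a / (1 - a))).
  assert (Hr0 : 0 <= r) by (apply Rmult_le_pos; apply Rdiv_le_0_compat; lra).
  assert (Hr1 : r < 1).
  { unfold r. assert (0 < b * (1 - a)) by (apply Rmult_lt_0_compat; lra).
    assert (E : (1 - b) / b * (a / (1 - a)) = (a - a * b) / (b - a * b)) by (field; repeat split; lra).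
    rewrite E. apply Rmult_lt_reg_r with (b - a * b); [lra|]. unfold Rdiv.
    rewrite Rmult_assoc, Rinv_l by lra. lra. }
  destruct (pow_lt_1_zero r ltac:(rewrite Rabs_right; lra) d Hd) as [K HK].
  specialize (HK K (le_n K)). rewrite Rabs_right in HK by (apply Rle_ge, pow_le; auto).
  exists (Hs a b K). split.
  - intros w Hw. destruct (U_cover a b K w Hw) as [n Hn]. exists (prefix w n). split; auto. apply cyl_prefix.
  - intros L ND HFL. pose proof (H_bound a b Hab Hb1 K L ND HFL). fold r in H. lra.
Qed.
End D.

Section M.
Variables F G : list bool -> R.
Hypothesis HF : weight F.
Hypothesis HG : weight G.

Lemma not_io_ev P : ~ io P -> ev (fun n => ~ P n).
Proof.
  intros H. apply not_all_ex_not in H as [N HN]. exists N. intros n Hn HP. apply HN. eauto.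
Qed.

Lemma ev_and P Q : ev P -> ev Q -> ev (fun n => P n /\ Q n).
Proof. intros [N1 H1] [N2 H2]. exists (Nat.max N1 N2). intros n Hn. split; [apply H1|apply H2]; lia. Qed.

Lemma noncv_grid w : ~ (exists l, Un_cv (Dn F G w) l) ->
  exists m, True /\ exists j, (j <= m)%nat /\ U F G (INR j / INR (S m)) (INR (S j) / INR (S m)) w.
Proof.
  intros Hn. apply NNPP. intros Hc. apply Hn.
  assert (Hno : forall m j, (j <= m)%nat -> ~ U F G (INR j / INR (S m)) (INR (S j) / INR (S m)) w).
  { intros m j Hj HU. apply Hc. exists m. split; auto. exists j. auto. }
  clear Hc Hn.
  destruct (R_complete (Dn F G w)) as [l Hl]; [|exists l; auto].
  intros e He. destruct (archimed_cor1 (e / 2)) as [N [HN1 HN2]]; [lra|].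
  set (m := pred N). assert (HmN : S m = N) by (unfold m; lia).
  set (q := INR (S m)). assert (Hq : 0 < q) by (apply lt_0_INR; lia).
  assert (Hrange : forall n, 0 <= Dn F G w n <= 1) by (intros; apply Dval_range; auto).
  assert (Hclaim : forall j, (j <= m)%nat -> ev (fun n => INR j / q <= Dn F G w n) \/
            exists i, ev (fun n => INR i / q <= Dn F G w n <= INR (i + 2) / q)).
  { induction j as [|j IH]; intros Hj.
    - left. exists 0%nat. intros n _. rewrite INR_0. unfold Rdiv. rewrite Rmult_0_l. apply Hrange.
    - destruct (IH ltac:(lia)) as [Hev|Hw]; [|right; auto].
      specialize (Hno m (S j) Hj). unfold U in Hno. apply not_and_or in Hno as [H1|H2].
      + left. destruct (not_io_ev _ H1) as [N0 HN0]. exists N0. intros n Hn. specialize (HN0 n Hn). fold q in HN0. apply Rnot_lt_le; auto.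
      + right. exists j. destruct (ev_and _ _ Hev (not_io_ev _ H2)) as [N0 HN0]. exists N0. intros n Hn.
        destruct (HN0 n Hn) as [Ha Hb]. fold q in Hb. replace (j + 2)%nat with (S (S j)) by lia. lra. }
  assert (Hwin : exists i, ev (fun n => INR i / q <= Dn F G w n <= INR (i + 2) / q)).
  { destruct (Hclaim m (le_n m)) as [Hev|Hw]; auto. exists m. destruct Hev as [N0 HN0]. exists N0.
    intros n Hn. split; auto. apply Rle_trans with 1; [apply Hrange|].
    assert (INR (S m) <= INR (m + 2)) by (apply le_INR; lia). fold q in H.
    replace 1 with (q * / q) by (field; lra). unfold Rdiv. apply Rmult_le_compat_r; [left; apply Rinv_0_lt_compat; lra|]. exact H. }
  destruct Hwin as [i [N0 HN0]]. exists N0. intros n n' Hn Hn'.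
  pose proof (HN0 n Hn). pose proof (HN0 n' Hn').
  assert (E : INR (i + 2) / q = INR i / q + 2 / q) by (rewrite plus_INR; simpl; field; lra).
  assert (2 / q < e).
  { unfold q. rewrite HmN. unfold Rdiv. lra. }
  unfold Rdist. apply Rabs_def1; lra.
Qed.

Definition Nset (w : seqOmega) := ~ (exists l, Un_cv (Dn F G w) l).

Lemma N_null d : d > 0 -> Cov G Nset d.
Proof.
  intros Hd. eapply Cov_mono; [| intros w Hw; apply noncv_grid; exact Hw | apply Rle_refl].
  apply (Cov_union Nat.eq_dec G (fun _ => True) _ (fun m => d * (1/2)^(S m))).
  - intros m _. apply (Cov_union Nat.eq_dec G (fun j => (j <= m)%nat) _ (fun _ => d * (1/2)^(S m) / INR (S m))).
    + intros j Hj. apply U_null; auto.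
      * split. apply Rdiv_le_0_compat; [apply pos_INR|apply lt_0_INR; lia].
        unfold Rdiv. apply Rmult_lt_compat_r; [apply Rinv_0_lt_compat, lt_0_INR; lia|]. apply lt_INR; lia.
      * apply Rmult_le_reg_r with (INR (S m)); [apply lt_0_INR; lia|].
        unfold Rdiv. rewrite Rmult_assoc, Rinv_l by (apply not_0_INR; lia). rewrite Rmult_1_r, Rmult_1_l.
        apply le_INR; lia.
      * apply Rdiv_lt_0_compat; [apply Rmult_lt_0_compat; [lra|apply pow_lt; lra]|apply lt_0_INR; lia].
    + intros J ND HJ. rewrite sumw_const.
      assert (Hl : (length J <= S m)%nat).
      { rewrite <- (length_seq (S m) 0). apply NoDup_incl_length; auto. intros j Hj.
        rewrite Forall_forall in HJ. apply in_seq. specialize (HJ j Hj). lia. }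
      apply le_INR in Hl.
      assert (0 <= d * (1/2)^(S m) / INR (S m)).
      { apply Rdiv_le_0_compat; [apply Rmult_le_pos; [lra|apply pow_le; lra]|apply lt_0_INR; lia]. }
      apply Rle_trans with (INR (S m) * (d * (1/2)^(S m) / INR (S m))); [apply Rmult_le_compat_r; auto|].
      right. field. apply not_0_INR; lia.
  - intros J ND _.
    assert (exists N, forall k, In k J -> (k <= N)%nat) as [N HN].
    { clear. induction J as [|k J [N HN]]; [exists 0%nat; intros k []|].
      exists (Nat.max k N). intros k' [<-|Hk']; [lia|specialize (HN k' Hk'); lia]. }
    eapply Rle_trans; [apply (sumw_nat_le _ J N); auto|].
    + intros n. apply Rmult_le_pos; [lra|apply pow_le; lra].
    + assert (E : sum_f_R0 (fun m => d * (1/2)^(S m)) N = sum_f_R0 (fun k => (1/2)^(k+1)) N * d).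
      { rewrite Rmult_comm, scal_sum. apply sum_eq. intros i _. rewrite Nat.add_1_r. ring. }
      rewrite E. apply Rle_trans with (1 * d); [|lra]. apply Rmult_le_compat_r; [lra|].
      pose proof (geom_sum 1 N). assert (0 <= (1/2)^(S N + 1)) by (apply pow_le; lra). simpl (2 * (1/2)^1) in *. lra.
Qed.
End M.

Theorem main_abs F G (HF : weight F) (HG : weight G) eps (A : seqOmega -> Prop) :
  0 < eps < 1 -> ext_measure G A > 0 -> ext_measure F A < eps / (1 - eps) * ext_measure G A ->
  ext_measure G (fun w => A w /\ exists l, Un_cv (Dn F G w) l /\ l < eps) > 0.
Proof.
  intros Heps HGA HFA.
  set (R0 := fun w => A w /\ exists l, Un_cv (Dn F G w) l /\ l < eps).
  destruct (Rlt_le_dec 0 (ext_measure G R0)) as [|Hle]; [auto|exfalso].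
  set (Fm := ext_measure F A) in *. set (Gm := ext_measure G A) in *.
  assert (HFm : 0 <= Fm) by (apply ext_nonneg; auto).
  set (k := (1 - eps) / eps).
  assert (Hk : 0 < k) by (unfold k; apply Rdiv_lt_0_compat; lra).
  assert (HkF : k * Fm < Gm).
  { assert (E : Gm = k * (eps / (1 - eps) * Gm)) by (unfold k; field; lra).
    rewrite E at 1. apply Rmult_lt_compat_l; auto. }
  set (gam := Gm - k * Fm).
  assert (Hgam : 0 < gam) by (unfold gam; lra).
  set (c := k + Fm + 3). assert (Hc : 0 < c) by (unfold c; lra).
  set (d := Rmin 1 (gam / (2 * c))).
  assert (Hd0 : 0 < d) by (apply Rmin_glb_lt; [lra|apply Rdiv_lt_0_compat; lra]).
  assert (Hd1 : d <= 1) by apply Rmin_l.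
  assert (Hd2 : d * c <= gam / 2).
  { apply Rle_trans with (gam / (2 * c) * c); [apply Rmult_le_compat_r; [lra|apply Rmin_r]|].
    right. field. lra. }
  set (k' := k + d).
  set (th := 1 / (1 + k')).
  assert (Hth0 : 0 < th <= 1).
  { unfold th. split; [apply Rdiv_lt_0_compat; unfold k'; lra|].
    apply Rmult_le_reg_r with (1 + k'); [unfold k'; lra|]. unfold Rdiv. rewrite Rmult_assoc, Rinv_l by (unfold k'; lra). unfold k'; lra. }
  assert (Hthe : th < eps).
  { assert (E : eps * (1 + k') = 1 + eps * d) by (unfold k', k; field; lra).
    unfold th. apply Rmult_lt_reg_r with (1 + k'); [unfold k'; lra|]. unfold Rdiv. rewrite Rmult_assoc, Rinv_l by (unfold k'; lra).
    assert (0 < eps * d) by (apply Rmult_lt_0_compat; lra). lra. }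
  assert (Hk'th : (1 - th) / th = k') by (unfold th, k'; field; lra).
  destruct (ext_Cov F HF A (Fm + d) ltac:(unfold Fm; lra)) as [CA [CAcov CAb]].
  destruct (ext_Cov G HG R0 d ltac:(lra)) as [CR [CRcov CRb]].
  destruct (N_null F G HF HG d Hd0) as [CN [CNcov CNb]].
  set (P := fun x => Dval F G x > th).
  assert (Hcov : Cov G A (d + (d + k' * (Fm + d)))).
  { exists (fun u => CR u \/ (CN u \/ exists s, CA s /\ Stop s P u)). split.
    - intros w Aw. destruct (classic (R0 w)) as [HR|HR].
      + destruct (CRcov w HR) as [s [Cs Hs]]. eauto.
      + destruct (classic (exists l, Un_cv (Dn F G w) l)) as [[l Hl]|Hn].
        * assert (Hl2 : l >= eps). { destruct (Rlt_le_dec l eps); [|lra]. exfalso. apply HR. split; eauto. }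
          destruct (CAcov w Aw) as [s [Cs Hs]]. unfold cylinder in Hs.
          destruct (Hl (l - th) ltac:(lra)) as [N0 HN0].
          set (n := length s). set (m := Nat.max N0 n).
          specialize (HN0 m ltac:(unfold m; lia)). unfold Rdist in HN0. apply Rabs_def2 in HN0.
          destruct (stop_exists w P n m ltac:(unfold m; lia)) as [m' [_ Hst]].
          { unfold P. unfold Dn in HN0. lra. }
          exists (prefix w m'). split; [|apply cyl_prefix]. right. right. exists s. split; auto.
          replace (prefix w n) with s in Hst by (symmetry; exact Hs). exact Hst.
        * destruct (CNcov w Hn) as [s [Cs Hs]]. eauto.
    - intros L ND HFL. apply (union2_bound G CR (fun u => CN u \/ exists s, CA s /\ Stop s P u)); auto.
      intros L' ND' HF'. apply (union2_bound G CN (fun u => exists s, CA s /\ Stop s P u)); auto.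
      intros L2 ND2 HF2.
      destruct (union_bound (list_eq_dec Bool.bool_dec) G CA (fun s u => Stop s P u) (fun s => k' * F s) L2 ND2 HF2)
        as [J [NDJ [QJ HJ]]].
      + intros s _ L3 ND3 HF3. apply Rle_trans with (sumw (fun x => k' * F x) L3).
        * apply sumw_le. intros x Hx. rewrite Forall_forall in HF3. destruct (HF3 x Hx) as [_ [Px _]].
          rewrite <- Hk'th. apply Dval_hi; auto.
        * rewrite sumw_scale. apply Rmult_le_compat_l; [unfold k'; lra|]. apply (stop_sum F HF s P L3 ND3 HF3).
      + rewrite sumw_scale in HJ. specialize (CAb J NDJ QJ).
        assert (k' * sumw F J <= k' * (Fm + d)) by (apply Rmult_le_compat_l; [unfold k'; lra|auto]). lra. }
  apply (Cov_ext G HG) in Hcov.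
  assert (E : k' * (Fm + d) = k * Fm + d * (k + Fm + d)) by (unfold k'; ring).
  assert (d * (k + Fm + d + 2) <= d * c) by (apply Rmult_le_compat_l; unfold c; lra).
  assert (E2 : d * (k + Fm + d + 2) = d * (k + Fm + d) + 2 * d) by ring.
  unfold gam in Hd2. fold Gm in Hcov. lra.
Qed.

Lemma hist_app1 f g s b : hist f g (s ++ [b]) = hist f g s ++ [(b, f (hist f g s), g (hist f g s))].
Proof. unfold hist. rewrite fold_left_app. reflexivity. Qed.

Lemma length_hist f g s : length (hist f g s) = length s.
Proof.
  induction s as [|b s IH] using rev_ind; [reflexivity|].
  rewrite hist_app1, !length_app, IH. reflexivity.
Qed.

Lemma fold_mul (h : list entry) (q : entry -> R) c :
  fold_right (fun e acc => q e * acc) c h = fold_right (fun e acc => q e * acc) 1 h * c.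
Proof. induction h; simpl; [ring|]. rewrite IHh. ring. Qed.

Lemma fweight_app1 h e : fweight (h ++ [e]) = fweight h * pr (snd (fst e)) (fst (fst e)).
Proof. induction h; unfold fweight in *; simpl; [ring|]. rewrite IHh. ring. Qed.
Lemma gweight_app1 h e : gweight (h ++ [e]) = gweight h * pr (snd e) (fst (fst e)).
Proof. induction h; unfold gweight in *; simpl; [ring|]. rewrite IHh. ring. Qed.

Lemma pr_nonneg p b : 0 <= pr p b.
Proof. destruct p as [x Hx]. destruct b; simpl; lra. Qed.

Lemma pr_sum p : pr p true + pr p false = 1.
Proof. simpl. ring. Qed.

Lemma fcyl_weight f g : weight (fcyl f g).
Proof.
  split; [|split].
  - intros s. unfold fcyl, fweight. induction (hist f g s); simpl; [lra|].
    apply Rmult_le_pos; auto. apply pr_nonneg.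
  - reflexivity.
  - intros s. unfold fcyl. rewrite !hist_app1, !fweight_app1. simpl.
    ring.
Qed.

Lemma gcyl_weight f g : weight (gcyl f g).
Proof.
  split; [|split].
  - intros s. unfold gcyl, gweight. induction (hist f g s); simpl; [lra|].
    apply Rmult_le_pos; auto. apply pr_nonneg.
  - reflexivity.
  - intros s. unfold gcyl. rewrite !hist_app1, !gweight_app1. simpl.
    ring.
Qed.

Lemma firstn_hist f g w n : firstn n (hist f g (prefix w (S n))) = hist f g (prefix w n).
Proof.
  rewrite prefix_S, hist_app1.
  pose proof (firstn_app_2 0 (hist f g (prefix w n)) [(w n, f (hist f g (prefix w n)), g (hist f g (prefix w n)))]) as E.
  rewrite Nat.add_0_r, length_hist, prefix_length in E. rewrite E. simpl. apply app_nil_r.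
Qed.

Lemma Tt_S f g w n : Tt Dtest f g w (S n) = Dval (fcyl f g) (gcyl f g) (prefix w n).
Proof. unfold Tt, Dtest, Dval, fcyl, gcyl. rewrite firstn_hist. reflexivity. Qed.

Lemma cv_shift (u : nat -> R) l : Un_cv (fun n => u (S n)) l -> Un_cv u l.
Proof.
  intros H e He. destruct (H e He) as [N HN]. exists (S N). intros n Hn.
  destruct n; [lia|]. apply HN. lia.
Qed.

Lemma cv_one_minus (u : nat -> R) l : Un_cv u l -> Un_cv (fun n => 1 - u n) (1 - l).
Proof.
  intros H e He. destruct (H e He) as [N HN]. exists N. intros n Hn. specialize (HN n Hn).
  unfold Rdist in *. replace (1 - u n - (1 - l)) with (- (u n - l)) by ring. rewrite Rabs_Ropp. auto.
Qed.

Lemma Dval_swap F G s : 0 <= F s -> 0 <= G s -> Dval G F s = 1 - Dval F G s.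
Proof.
  intros H1 H2. unfold Dval.
  destruct (Rlt_dec 0 (F s)); destruct (Rlt_dec 0 (G s)); try (field; lra).
Qed.

Theorem proposition3 : reasonable Dtest.
Proof.
  intros f g A _. split.
  - intros eps Heps HgA HfA.
    apply Rlt_le_trans with (ext_measure (gcyl f g) (fun w => A w /\ exists l, Un_cv (Dn (fcyl f g) (gcyl f g) w) l /\ l < eps)).
    + apply main_abs; auto using fcyl_weight, gcyl_weight. lra.
    + apply ext_mono; [apply gcyl_weight|]. intros w [Aw [l [Hl Hle]]]. split; auto.
      exists l. split; auto. unfold Tlim. apply cv_shift.
      intros e He. destruct (Hl e He) as [N HN]. exists N. intros n Hn. rewrite Tt_S. apply HN; auto.
  - intros eps Heps HfA HgA.
    apply Rlt_le_trans with (ext_measure (fcyl f g) (fun w => A w /\ exists l, Un_cv (Dn (gcyl f g) (fcyl f g) w) l /\ l < 1 - eps)).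
    + apply main_abs; auto using fcyl_weight, gcyl_weight. lra.
      replace (1 - (1 - eps)) with eps by ring. exact HgA.
    + apply ext_mono; [apply fcyl_weight|]. intros w [Aw [l [Hl Hle]]]. split; auto.
      exists (1 - l). split; [|lra]. unfold Tlim. apply cv_shift.
      pose proof (cv_one_minus _ _ Hl) as Hl'.
      intros e He. destruct (Hl' e He) as [N HN]. exists N. intros n Hn. rewrite Tt_S.
      specialize (HN n Hn). cbv beta in HN. unfold Dn in HN. rewrite Dval_swap in HN; [| apply fcyl_weight | apply gcyl_weight].
      replace (1 - (1 - Dval (fcyl f g) (gcyl f g) (prefix w n))) with (Dval (fcyl f g) (gcyl f g) (prefix w n)) in HN by ring.
      exact HN.
Qed.
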